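(* In the setting of the adaptive implicit-explicit iteration described in the context, suppose there are $a>0$ and $\eta_{\min}>0$ such that the step size satisfies $0<\eta_{\min}\le\eta\le\frac1{\|\bm T\|+2a}$. Then every limit point $(\bm d_*,\lambda_* )$ of the sequence $\{(\bm d_k,\lambda_k)\}$ is a KKT point of the problem $\min_{\|\bm d\|_2\le r}f(\bm d)$, i.e. it satisfies $\bm g+(\bm H+\lambda_*\bm I)\bm d_*=0$, $\lambda_*\ge0$, $\|\bm d_*\|_2\le r$ and $\lambda_*(\|\bm d_*\|_2-r)=0$.
   Context: Let $n\ge1$, $r>0$, $\bm g\in\mathbb R^n$ with $\bm g\neq0$, and $\bm H=\bm D+\bm T\in\mathbb R^{n\times n}$, where $\bm D$ is diagonal with nonnegative diagonal entries $D_{i,i}$ and $\bm T$ is symmetric; $\|\bm T\|$ is the spectral norm. Let $f(\bm d)=\bm g^\top\bm d+\frac12\bm d^\top\bm H\bm d$. Adaptive implicit-explicit iteration with step size $\eta>0$: set $\bm d_0=-r\bm g/\|\bm g\|_2$ and $\lambda_0=0$. For $k=0,1,2,\dots$ (run indefinitely): let $\bm b_k=\bm d_k-\eta(\bm g+\bm T\bm d_k)$ and $\phi_k(\lambda)=\sum_{i=1}^n\big([\bm b_k]_i/(1+\eta(D_{i,i}+\lambda))\big)^2$; set $\lambda_{k+1}=0$ if $\phi_k(0)\le r^2$, and otherwise let $\lambda_{k+1}>0$ be the solution of $\phi_k(\lambda)=r^2$; then $\bm d_{k+1}=(\bm I+\eta(\bm D+\lambda_{k+1}\bm I))^{-1}\bm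 b_k$. *)

(* Defs.v *)
From HB Require Import structures.
From mathcomp Require Import all_boot all_order all_algebra.
From mathcomp Require Import classical_sets reals.
Set Implicit Arguments. Unset Strict Implicit. Unset Printing Implicit Defensive.
Import Order.TTheory GRing.Theory Num.Theory.
Local Open Scope ring_scope.
Local Open Scope classical_set_scope.

Definition norm2 (R : realType) (n : nat) (v : 'cV[R]_n) : R :=
  Num.sqrt (\sum_(i < n) v i ord0 ^+ 2).

Definition specnorm (R : realType) (n : nat) (T : 'M[R]_n) : R :=
  sup [set norm2 (T *m x) | x in [set x : 'cV[R]_n | norm2 x <= 1]].

Definition is_diag_nonneg (R : realType) (n : nat) (D : 'M[R]_n) : Prop :=
  (forall i j : 'I_n, i != j -> D i j = 0) /\ (forall i : 'I_n, 0 <= D i i).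

Definition bvec (R : realType) (n : nat) (T : 'M[R]_n) (g : 'cV[R]_n) (eta : R)
  (d : 'cV[R]_n) : 'cV[R]_n := d - eta *: (g + T *m d).

Definition phi (R : realType) (n : nat) (D : 'M[R]_n) (eta : R) (b : 'cV[R]_n)
  (lam : R) : R :=
  \sum_(i < n) (b i ord0 / (1 + eta * (D i i + lam))) ^+ 2.

(* The sequences (d_k, lambda_k) are exactly the adaptive implicit-explicit
   iterates: since phi is strictly decreasing on [0, oo) when phi(0) > r^2,
   the positive solution of phi(lambda) = r^2 is unique, so this relational
   description determines the sequences uniquely. *)
Definition aie_iterates (R : realType) (n : nat) (D T : 'M[R]_n) (g : 'cV[R]_n)
  (r eta : R) (d : nat -> 'cV[R]_n) (lam : nat -> R) : Prop :=
  d 0%N = (- r / norm2 g) *: g /\ lam 0%N = 0 /\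
  forall k : nat,
    let b := bvec T g eta (d k) in
    ((phi D eta b 0 <= r ^+ 2 /\ lam k.+1 = 0) \/
     (r ^+ 2 < phi D eta b 0 /\ 0 < lam k.+1 /\ phi D eta b (lam k.+1) = r ^+ 2)) /\
    d k.+1 = invmx (1%:M + eta *: (D + (lam k.+1)%:M)) *m b.

Definition limit_point (R : realType) (n : nat) (d : nat -> 'cV[R]_n) (lam : nat -> R)
  (ds : 'cV[R]_n) (ls : R) : Prop :=
  forall (eps : R) (N : nat), 0 < eps ->
    exists k : nat, (N <= k)%N /\ norm2 (d k - ds) < eps /\ `|lam k - ls| < eps.

(* KKT point of min_{||d||_2 <= r} g^T d + 1/2 d^T H d. *)
Definition kkt_point (R : realType) (n : nat) (H : 'M[R]_n) (g : 'cV[R]_n) (r : R)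
  (ds : 'cV[R]_n) (ls : R) : Prop :=
  g + (H + ls%:M) *m ds = 0 /\ 0 <= ls /\ norm2 ds <= r /\ ls * (norm2 ds - r) = 0.

(* Main.v *)
Require Import Defs.
From HB Require Import structures.
From mathcomp Require Import all_boot all_order all_algebra.
From mathcomp Require Import classical_sets reals.
From mathcomp Require Import ring lra.
Set Implicit Arguments. Unset Strict Implicit. Unset Printing Implicit Defensive.
Import Order.TTheory GRing.Theory Num.Theory.
Local Open Scope ring_scope.

Section Aux.
Variable R : realType.

Lemma CS_fun (n : nat) (a b : 'I_n -> R) :
  (\sum_i a i * b i) ^+ 2 <= (\sum_i a i ^+ 2) * (\sum_i b i ^+ 2).
Proof.
set A := \sum_i a i ^+ 2; set B := \sum_i b i ^+ 2; set C := \sum_i a i * b i.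
have B0 : 0 <= B by apply: sumr_ge0 => i _; exact: sqr_ge0.
have A0 : 0 <= A by apply: sumr_ge0 => i _; exact: sqr_ge0.
have key : 0 <= B * (A * B - C ^+ 2).
  have -> : B * (A * B - C ^+ 2) = \sum_i (B * a i - C * b i) ^+ 2.
    have -> : \sum_i (B * a i - C * b i) ^+ 2 =
      \sum_i (B ^+ 2 * a i ^+ 2 - (2 * B * C) * (a i * b i) + C ^+ 2 * b i ^+ 2).
      by apply: eq_bigr => i _; ring.
    rewrite big_split sumrB /= -!mulr_sumr -/A -/B -/C; ring.
  by apply: sumr_ge0 => i _; exact: sqr_ge0.
have [Bz|Bp] := eqVneq B 0.
  have bz : forall i, b i = 0.
    move=> i; apply/eqP; rewrite -sqrf_eq0; apply/eqP.
    by move/eqP: Bz; rewrite psumr_eq0 => [/allP H|i' _]; [apply/eqP; exact: H (mem_index_enum i) | exact: sqr_ge0].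
  have -> : C = 0 by rewrite /C big1 // => i _; rewrite bz mulr0.
  by rewrite Bz; lra.
have Bpos : 0 < B by rewrite lt_neqAle eq_sym Bp B0.
rewrite pmulr_rge0 // in key; lra.
Qed.
End Aux.


Section Vec.
Variable R : realType.
Variable n : nat.
Implicit Types u v w x y : 'cV[R]_n.

Definition ns v := \sum_i v i ord0 ^+ 2.
Definition dot u v := \sum_i u i ord0 * v i ord0.

Lemma ns_ge0 v : 0 <= ns v.
Proof. by apply: sumr_ge0 => i _; exact: sqr_ge0. Qed.

Lemma norm2_ge0 v : 0 <= norm2 v.
Proof. exact: sqrtr_ge0. Qed.

Lemma norm2_sq v : norm2 v ^+ 2 = ns v.
Proof. by rewrite /norm2 sqr_sqrtr // ns_ge0. Qed.

Lemma sq_le_nonneg (p q : R) : 0 <= q -> p ^+ 2 <= q ^+ 2 -> p <= q.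
Proof. move=> q0 h; nra. Qed.

Lemma CS_dot u v : dot u v <= norm2 u * norm2 v.
Proof.
apply: sq_le_nonneg; first by rewrite mulr_ge0 ?norm2_ge0.
by rewrite exprMn !norm2_sq; exact: CS_fun.
Qed.

Lemma CS_dotN u v : - (norm2 u * norm2 v) <= dot u v.
Proof.
have := CS_dot (- u) v.
have -> : norm2 (- u) = norm2 u.
  by rewrite /norm2; congr Num.sqrt; apply: eq_bigr => i _; rewrite mxE sqrrN.
have -> : dot (- u) v = - dot u v.
  by rewrite /dot -sumrN; apply: eq_bigr => i _; rewrite mxE mulNr.
lra.
Qed.

Lemma coord_sq v i : v i ord0 ^+ 2 <= ns v.
Proof.
rewrite /ns (bigD1 i) //= lerDl; apply: sumr_ge0 => j _; exact: sqr_ge0.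
Qed.

Lemma coord_le v i : `|v i ord0| <= norm2 v.
Proof.
apply: sq_le_nonneg; first exact: norm2_ge0.
by rewrite real_normK ?num_real // norm2_sq coord_sq.
Qed.

Lemma ns_add u v : ns (u + v) = ns u + 2 * dot u v + ns v.
Proof.
rewrite /ns /dot mulr_sumr -!big_split /=; apply: eq_bigr => i _; rewrite mxE; ring.
Qed.

Lemma norm2_triangle u v : norm2 (u + v) <= norm2 u + norm2 v.
Proof.
apply: sq_le_nonneg; first by rewrite addr_ge0 ?norm2_ge0.
rewrite norm2_sq ns_add sqrrD !norm2_sq.
have := CS_dot u v; lra.
Qed.

Lemma norm2N v : norm2 (- v) = norm2 v.
Proof. by rewrite /norm2; congr Num.sqrt; apply: eq_bigr => i _; rewrite mxE sqrrN. Qed.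

Lemma norm2_scale (k : R) v : norm2 (k *: v) = `|k| * norm2 v.
Proof.
rewrite /norm2 -sqrtr_sqr -sqrtrM ?sqr_ge0 //; congr Num.sqrt.
by rewrite /ns mulr_sumr; apply: eq_bigr => i _; rewrite mxE exprMn.
Qed.

Lemma norm2_eq0 v : norm2 v = 0 -> v = 0.
Proof.
move=> h; apply/matrixP => i j; rewrite ord1 mxE; apply/eqP.
by rewrite -normr_le0 -h coord_le.
Qed.

Lemma dot_sym (T : 'M[R]_n) x y : T^T = T -> dot x (T *m y) = dot y (T *m x).
Proof.
move=> sT; rewrite /dot.
under eq_bigr => i _ do rewrite mxE mulr_sumr.
under [RHS]eq_bigr => i _ do rewrite mxE mulr_sumr.
rewrite exchange_big /=; apply: eq_bigr => i _; apply: eq_bigr => j _.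
have -> : T j i = T i j by rewrite -{1}sT mxE.
ring.
Qed.

Lemma mulmx_coord (T : 'M[R]_n) x i : (T *m x) i ord0 = \sum_j T i j * x j ord0.
Proof. by rewrite mxE. Qed.

Definition Bd (T : 'M[R]_n) := \sum_i \sum_j T i j ^+ 2.

Lemma ns_mul_le (T : 'M[R]_n) x : ns (T *m x) <= Bd T * ns x.
Proof.
rewrite /Bd mulr_suml; apply: ler_sum => i _; rewrite mulmx_coord.
exact: CS_fun.
Qed.

Lemma specE_has_sup (T : 'M[R]_n) :
  has_sup [set norm2 (T *m x) | x in [set x : 'cV[R]_n | norm2 x <= 1]].
Proof.
split.
  exists (norm2 (T *m 0)); exists 0 => //=.
  by rewrite /norm2 /ns big1 ?sqrtr0 // => i _; rewrite mxE expr0n.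
exists (Num.sqrt (Bd T)) => _ [x /= hx <-].
rewrite /norm2 ler_sqrt; last by apply: sumr_ge0 => i _; apply: sumr_ge0 => j _; exact: sqr_ge0.
apply: (le_trans (ns_mul_le T x)).
have B0 : 0 <= Bd T by apply: sumr_ge0 => i _; apply: sumr_ge0 => j _; exact: sqr_ge0.
have : ns x <= 1.
  by rewrite -norm2_sq; have := norm2_ge0 x; nra.
move=> h; have := ns_ge0 x; nra.
Qed.

Lemma spec_ge0 (T : 'M[R]_n) : 0 <= specnorm T.
Proof.
have := sup_upper_bound (specE_has_sup T); apply.
exists 0 => /=.
  by rewrite /norm2 big1 ?sqrtr0 ?ler01 // => i _; rewrite mxE expr0n.
by rewrite mulmx0 /norm2 big1 ?sqrtr0 // => i _; rewrite mxE expr0n.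
Qed.

Lemma spec_bound (T : 'M[R]_n) x : norm2 (T *m x) <= specnorm T * norm2 x.
Proof.
have [c0|cn] := eqVneq (norm2 x) 0.
  by rewrite c0 mulr0 (norm2_eq0 c0) mulmx0 /norm2 big1 ?sqrtr0 // => i _; rewrite mxE expr0n.
have cp : 0 < norm2 x by rewrite lt_neqAle eq_sym cn norm2_ge0.
set y := (norm2 x)^-1 *: x.
have ny : norm2 y <= 1.
  by rewrite /y norm2_scale ger0_norm ?invr_ge0 ?norm2_ge0 // mulVf.
have : norm2 (T *m y) <= specnorm T.
  by apply: (sup_upper_bound (specE_has_sup T)); exists y.
rewrite /y -scalemxAr norm2_scale ger0_norm ?invr_ge0 ?norm2_ge0 //.
rewrite -(ler_pM2l cp) mulrA mulfV // mul1r mulrC //.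
Qed.

Lemma quad_bound (T : 'M[R]_n) w : dot w (T *m w) <= specnorm T * ns w.
Proof.
apply: (le_trans (CS_dot _ _)).
have := spec_bound T w; have := norm2_ge0 w; rewrite -norm2_sq; nra.
Qed.

Lemma dotN_bound (T : 'M[R]_n) w : - (specnorm T * ns w) <= dot w (T *m w).
Proof.
apply: le_trans (CS_dotN _ _).
have := spec_bound T w; have := norm2_ge0 w; rewrite -norm2_sq; nra.
Qed.

End Vec.


Section Iter.
Variable R : realType.
Variable n : nat.
Variables (D T : 'M[R]_n) (g : 'cV[R]_n) (r eta : R) (d : nat -> 'cV[R]_n) (lam : nat -> R).
Hypothesis hD : is_diag_nonneg D.
Hypothesis eta0 : 0 < eta.
Hypothesis hit : aie_iterates D T g r eta d lam.

Lemma lam_ge0 k : 0 <= lam k.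
Proof.
case: hit => _ [l0 hk]; case: k => [|k]; first by rewrite l0.
by case: (hk k) => [[[_ ->]|[_ [/ltW ? _]]] _].
Qed.

Lemma diag_mul (A : 'M[R]_n) (x : 'cV[R]_n) i : (forall j, j != i -> A i j = 0) ->
  (A *m x) i ord0 = A i i * x i ord0.
Proof.
move=> h; rewrite mxE (bigD1 i) //= big1 ?addr0 // => j ji.
by rewrite h // mul0r.
Qed.

Definition Mk (l : R) : 'M[R]_n := 1%:M + eta *: (D + l%:M).

Lemma Mk_entry l i j : Mk l i j = (1 + eta * (D i i + l)) *+ (i == j).
Proof.
rewrite /Mk !mxE; case: eqVneq => [->|ij]; first by rewrite !mulr1n.
by rewrite !mulr0n (proj1 hD) // add0r addr0 mulr0.
Qed.

Lemma Mk_unit l : 0 <= l -> Mk l \in unitmx.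
Proof.
move=> l0.
have -> : Mk l = diag_mx (\row_i (1 + eta * (D i i + l))).
  by apply/matrixP => i j; rewrite Mk_entry !mxE.
rewrite unitmxE det_diag unitfE; apply/prodf_neq0 => i _; rewrite mxE.
have h : 0 <= eta * (D i i + l) by apply: mulr_ge0; [exact: ltW | apply: addr_ge0; [exact: (proj2 hD i) | exact: l0]].
rewrite gt_eqF //; lra.
Qed.

Lemma cpos l i : 0 <= l -> 0 < 1 + eta * (D i i + l).
Proof.
move=> l0; have h : 0 <= eta * (D i i + l) by apply: mulr_ge0; [exact: ltW | apply: addr_ge0; [exact: (proj2 hD i) | exact: l0]].
lra.
Qed.

Lemma step_coord k i :
  (1 + eta * (D i i + lam k.+1)) * d k.+1 i ord0 =
  d k i ord0 - eta * (g i ord0 + (T *m d k) i ord0).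
Proof.
case: hit => _ [_ hk]; case: (hk k) => _ dk.
have : Mk (lam k.+1) *m d k.+1 = bvec T g eta (d k).
  by rewrite dk mulKVmx // Mk_unit // lam_ge0.
move/matrixP => /(_ i ord0).
rewrite diag_mul; last by move=> j ji; rewrite Mk_entry eq_sym (negbTE ji) mulr0n.
by rewrite Mk_entry eqxx mulr1n /bvec !mxE.
Qed.

Lemma coord_next k i : d k.+1 i ord0 =
  bvec T g eta (d k) i ord0 / (1 + eta * (D i i + lam k.+1)).
Proof.
have c := cpos i (lam_ge0 k.+1).
have -> : bvec T g eta (d k) i ord0 = d k i ord0 - eta * (g i ord0 + (T *m d k) i ord0) by rewrite /bvec !mxE.
rewrite -step_coord [_ * d k.+1 i ord0]mulrC mulfK //; exact: lt0r_neq0.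
Qed.

Lemma ns_phi k : ns (d k.+1) = phi D eta (bvec T g eta (d k)) (lam k.+1).
Proof. by rewrite /ns /phi; apply: eq_bigr => i _; rewrite coord_next. Qed.

Lemma ns_le k : ns (d k.+1) <= r ^+ 2.
Proof.
rewrite ns_phi; case: hit => _ [_ hk]; case: (hk k) => [[[h ->]|[_ [_ ->]]] _] //.
Qed.

Lemma ns_eq k : 0 < lam k.+1 -> ns (d k.+1) = r ^+ 2.
Proof.
rewrite ns_phi; case: hit => _ [_ hk]; case: (hk k) => [[[_ ->]|[_ [_ ->]]] _] //.
by rewrite ltxx.
Qed.

End Iter.


Section Desc.
Variable R : realType.
Variable n : nat.
Variables (D T : 'M[R]_n) (g : 'cV[R]_n) (r eta : R) (d : nat -> 'cV[R]_n) (lam : nat -> R).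
Hypothesis hD : is_diag_nonneg D.
Hypothesis eta0 : 0 < eta.
Hypothesis hit : aie_iterates D T g r eta d lam.
Hypothesis hsym : T^T = T.

Definition fq (x : 'cV[R]_n) :=
  \sum_i (g i ord0 * x i ord0 + D i i * x i ord0 ^+ 2 / 2) + dot x (T *m x) / 2.

Lemma descent m : fq (d m.+2) <=
  fq (d m.+1) - (eta^-1 - specnorm T / 2) * ns (d m.+2 - d m.+1).
Proof.
set u := d m.+2; set v := d m.+1; set w := u - v; set l := lam m.+2.
have wi : forall i, w i ord0 = u i ord0 - v i ord0 by move=> i; rewrite !mxE.
have Twi : forall i, (T *m w) i ord0 = (T *m u) i ord0 - (T *m v) i ord0.
  by move=> i; rewrite /w mulmxBr !mxE.
have E : dot u (T *m u) = dot v (T *m v) + dot w (T *m v) + dot v (T *m w) + dot w (T *m w).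
  rewrite /dot -!big_split /=; apply: eq_bigr => i _; rewrite Twi wi; ring.
rewrite (dot_sym v w hsym) in E.
have F : fq u - fq v = \sum_i (g i ord0 * w i ord0 + D i i * (u i ord0 ^+ 2 - v i ord0 ^+ 2) / 2
      + w i ord0 * (T *m v) i ord0) + dot w (T *m w) / 2.
  rewrite /fq E /dot.
  set s1 := \sum_i (g i ord0 * w i ord0 + _ + _).
  have -> : s1 = \sum_i (g i ord0 * u i ord0 + D i i * u i ord0 ^+ 2 / 2)
      - \sum_i (g i ord0 * v i ord0 + D i i * v i ord0 ^+ 2 / 2)
      + \sum_i w i ord0 * (T *m v) i ord0.
    by rewrite -sumrB -big_split /=; apply: eq_bigr => i _; rewrite wi; ring.
  by field.

have G : \sum_i (g i ord0 * w i ord0 + D i i * (u i ord0 ^+ 2 - v i ord0 ^+ 2) / 2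
      + w i ord0 * (T *m v) i ord0) <=
    \sum_i (- eta^-1 * w i ord0 ^+ 2 - l / 2 * (u i ord0 ^+ 2 - v i ord0 ^+ 2)).
  apply: ler_sum => i _.


  have st := step_coord hD eta0 hit m.+1 i.
  rewrite -/u -/v -/l in st.
  have gi : g i ord0 = (v i ord0 - (1 + eta * (D i i + l)) * u i ord0) / eta - (T *m v) i ord0.
    rewrite st; by field; rewrite ?lt0r_neq0.
  rewrite gi wi.
  have Dp := proj2 hD i; have lp : 0 <= l by exact: (lam_ge0 hit).
  have -> : ((v i ord0 - (1 + eta * (D i i + l)) * u i ord0) / eta - (T *m v) i ord0) *
     (u i ord0 - v i ord0) + D i i * (u i ord0 ^+ 2 - v i ord0 ^+ 2) / 2 +
     (u i ord0 - v i ord0) * (T *m v) i ord0 =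
     - eta^-1 * (u i ord0 - v i ord0) ^+ 2 - l * u i ord0 * (u i ord0 - v i ord0)
     - D i i * (u i ord0 - v i ord0) ^+ 2 / 2.
    by field; rewrite ?lt0r_neq0.
  have h1 : 0 <= D i i * (u i ord0 - v i ord0) ^+ 2 by apply: mulr_ge0 => //; exact: sqr_ge0.
  have h2 : 0 <= l * (u i ord0 - v i ord0) ^+ 2 by apply: mulr_ge0 => //; exact: sqr_ge0.
  nra.


have H : \sum_i (- eta^-1 * w i ord0 ^+ 2 - l / 2 * (u i ord0 ^+ 2 - v i ord0 ^+ 2))
   = - eta^-1 * ns w - l / 2 * (ns u - ns v).
  by rewrite sumrB -!mulr_sumr sumrB.
have L : 0 <= l / 2 * (ns u - ns v).
  have lp : 0 <= l by exact: (lam_ge0 hit).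
  have nv := ns_le hD eta0 hit m.
  have [l0|lpos] := eqVneq l 0; first by rewrite l0 !mul0r.
  have lp' : 0 < l by rewrite lt_neqAle eq_sym lpos lp.
  have nu := ns_eq hD eta0 hit lp'.
  rewrite -/u -/v in nv nu.
  apply: mulr_ge0; first lra.
  lra.
have Q := quad_bound T w.
lra.

Qed.

End Desc.


Lemma zero_of_small (R : realType) (x c C : R) : 0 < c -> 0 <= C ->
  (forall e, 0 < e -> c * `|x| <= C * e) -> x = 0.
Proof.
move=> c0 C0 H; apply/eqP; rewrite -normr_le0.
set y := c * `|x|.
have y0 : 0 <= y by rewrite mulr_ge0 // ltW.
have [yz|ypos] := eqVneq y 0.
  by move/eqP: yz; rewrite mulf_eq0 normr_eq0 (gt_eqF c0) /= => /eqP ->; rewrite normr0.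
have yp : 0 < y by rewrite lt_neqAle eq_sym ypos y0.
have C1 : 0 < C + 1 by lra.
have := H (y / (C + 1)) (divr_gt0 yp C1).
rewrite -/y mulrA ler_pdivlMr // => h.
exfalso; nra.
Qed.

Lemma absM_le (R : realType) (x y X Y : R) : `|x| <= X -> `|y| <= Y -> `|x * y| <= X * Y.
Proof. by move=> hx hy; rewrite normrM ler_pM. Qed.

Lemma norm2_swap (R : realType) n (x y : 'cV[R]_n) : norm2 (x - y) = norm2 (y - x).
Proof. by rewrite -opprB norm2N. Qed.

Lemma norm2_tri2 (R : realType) n (x y : 'cV[R]_n) : norm2 y <= norm2 x + norm2 (x - y).
Proof.
have := norm2_triangle x (y - x); rewrite addrC subrK norm2_swap //.
Qed.

Section Main.
Variable R : realType.
Variable n : nat.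
Variables (D T : 'M[R]_n) (g : 'cV[R]_n) (r eta a : R) (d : nat -> 'cV[R]_n) (lam : nat -> R).
Hypothesis hD : is_diag_nonneg D.
Hypothesis eta0 : 0 < eta.
Hypothesis hit : aie_iterates D T g r eta d lam.
Hypothesis hsym : T^T = T.
Hypothesis a0 : 0 < a.
Hypothesis ca : a <= eta^-1 - specnorm T / 2.
Hypothesis r0 : 0 < r.

Let F k := fq D T g (d k.+1).

Lemma norm_le k : norm2 (d k.+1) <= r.
Proof.
apply: sq_le_nonneg; first exact: ltW.
rewrite norm2_sq; exact: (ns_le hD eta0 hit).
Qed.

Lemma Fdec k : F k.+1 <= F k - a * ns (d k.+2 - d k.+1).
Proof.
have := descent hD eta0 hit hsym k; rewrite /F.
have := ler_wpM2r (ns_ge0 (d k.+2 - d k.+1)) ca; lra.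
Qed.

Lemma Fmono m k : (m <= k)%N -> F k <= F m.
Proof.
elim: k => [|k IH]; first by rewrite leqn0 => /eqP ->.
rewrite leq_eqVlt => /orP [/eqP ->//|]; rewrite ltnS => mk.
have := Fdec k; have := IH mk; have := mulr_ge0 (ltW a0) (ns_ge0 (d k.+2 - d k.+1)); lra.
Qed.

Definition Kb := norm2 g * r + specnorm T * r ^+ 2 / 2.

Lemma F_lb k : - Kb <= F k.
Proof.
rewrite /F /fq /Kb.
set x := d k.+1.
have nx : norm2 x <= r by exact: norm_le.
have nsx : ns x <= r ^+ 2 by exact: (ns_le hD eta0 hit).
have S0 := spec_ge0 T.
have h1 : - (norm2 g * r) <= \sum_i (g i ord0 * x i ord0 + D i i * x i ord0 ^+ 2 / 2).
  apply: (le_trans _ (_ : dot g x <= _)).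
    apply: le_trans (CS_dotN g x); rewrite lerN2; apply: ler_wpM2l => //; exact: norm2_ge0.
  rewrite /dot; apply: ler_sum => i _; rewrite lerDl.
  by apply: mulr_ge0; [apply: mulr_ge0; [exact: (proj2 hD i)|exact: sqr_ge0]|rewrite invr_ge0 ler0n].
have h2 := dotN_bound T x.
have h3 : specnorm T * ns x <= specnorm T * r ^+ 2 by apply: ler_wpM2l.
lra.
Qed.

Lemma small delta : 0 < delta -> exists m, forall k, (m <= k)%N -> a * ns (d k.+2 - d k.+1) < delta.
Proof.
move=> dp.
set E := range (fun k : nat => - F k).
have hs : has_sup E.
  split; first by exists (- F 0%N); exists 0%N.
  by exists Kb => _ [k _ <-]; have := F_lb k; lra.
have [_ [m _ <-] hm] := sup_adherent dp hs.
exists m => k mk.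
have ub : - F k.+1 <= sup E by apply: (sup_upper_bound hs); exists k.+1.
have := Fdec k; have := Fmono mk; lra.
Qed.


Lemma small_norm e : 0 < e -> exists m, forall k, (m <= k)%N -> norm2 (d k.+2 - d k.+1) < e.
Proof.
move=> e0.
have [m hm] := small (mulr_gt0 a0 (mulr_gt0 e0 e0)).
exists m => k mk; have := hm k mk.
set w := d k.+2 - d k.+1 => h.
have h' : ns w < e * e.
  by rewrite -(ltr_pM2l a0); exact: h.
have := norm2_ge0 w; have := norm2_sq w; rewrite expr2 => hs; rewrite -hs in h'.
nra.
Qed.

Variables (ds : 'cV[R]_n) (ls : R).
Hypothesis hlp : limit_point d lam ds ls.

Lemma ls_ge0 : 0 <= ls.
Proof.
rewrite leNgt; apply/negP => lsn.
have e0 : 0 < - ls by rewrite oppr_gt0.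
have [k [_ [_ hk]]] := hlp 0%N e0.
have := lam_ge0 hit k; move: hk; rewrite ltr_norml; lra.
Qed.

Lemma ds_le : norm2 ds <= r.
Proof.
rewrite leNgt; apply/negP => hr.
have e0 : 0 < norm2 ds - r by rewrite subr_gt0.
have [[|k] [k1 [hk _]]] := hlp 1%N e0; first by [].
have := norm2_tri2 (d k.+1) ds; have := norm_le k; lra.
Qed.

Lemma compl : ls * (norm2 ds - r) = 0.
Proof.
have [->|lsn] := eqVneq ls 0; first by rewrite mul0r.
have lsp : 0 < ls by rewrite lt_neqAle eq_sym lsn ls_ge0.
suff -> : norm2 ds = r by rewrite subrr mulr0.
apply/eqP; rewrite eq_le ds_le /=; rewrite leNgt; apply/negP => hr.
set e := Num.min ls (r - norm2 ds).
have e0 : 0 < e by rewrite lt_min lsp subr_gt0 hr.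
have [k [_ [hk hl]]] := hlp 0%N e0.
have el : e <= ls by rewrite ge_min lexx.
have er : e <= r - norm2 ds by rewrite ge_min lexx orbT.
have := lt_le_trans hl el; rewrite ltr_norml => /andP [hl1 _].
have hk' := lt_le_trans hk er.
case: k hk hl hl1 hk' => [|k] hk hl hl1 hk'.
  case: hit => _ [l0 _]; rewrite l0 in hl1; lra.
have lk : 0 < lam k.+1 by lra.
have nk : norm2 (d k.+1) = r.
  by rewrite /norm2 -/(ns _) (ns_eq hD eta0 hit lk) sqrtr_sqr ger0_norm // ltW.
have := norm2_tri2 ds (d k.+1); rewrite norm2_swap; lra.
Qed.

Lemma addE (A B : 'cV[R]_n) i : (A + B) i ord0 = A i ord0 + B i ord0.
Proof. by rewrite mxE. Qed.
Lemma subE (A B : 'cV[R]_n) i : (A - B) i ord0 = A i ord0 - B i ord0.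
Proof. by rewrite !mxE. Qed.

Lemma stat : g + ((D + T) + ls%:M) *m ds = 0.
Proof.
apply/matrixP => i j0; rewrite (ord1 j0) [RHS]mxE.
set rho := (g + (D + T + ls%:M) *m ds) i ord0.
have rhoE : rho = g i ord0 + D i i * ds i ord0 + (T *m ds) i ord0 + ls * ds i ord0.
  rewrite /rho !mulmxDl mul_scalar_mx !addE (@diag_mul R n D ds i); last first.
    by move=> j' ji; apply: (proj1 hD); rewrite eq_sym.
  have -> : (ls *: ds) i ord0 = ls * ds i ord0 by rewrite mxE.
  by rewrite !addrA.
have S0 := spec_ge0 T.
apply: (@zero_of_small R rho eta (1 + eta * D i i + eta * (2 * specnorm T) + eta * `|ls| + eta * r)) => //.
  have := proj2 hD i; have := normr_ge0 ls.
  have h1 : 0 <= eta * D i i by apply: mulr_ge0; [exact: ltW | exact: (proj2 hD i)].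
  have h2 : 0 <= eta * (2 * specnorm T) by apply: mulr_ge0; [exact: ltW | lra].
  have h3 : 0 <= eta * `|ls| by apply: mulr_ge0; [exact: ltW | exact: normr_ge0].
  have h4 : 0 <= eta * r by apply: mulr_ge0; exact: ltW.
  lra.
move=> e e0.
have [m hm] := small_norm e0.
have [k [mk [hk hl]]] := hlp m.+2 e0.
case: k mk hk hl => [|[|jj]] // mk hk hl.
have hw := hm jj mk.
set u := d jj.+2 in hk hw *; set v := d jj.+1 in hw *; set l := lam jj.+2 in hl *.
have st := step_coord hD eta0 hit jj.+1 i.
rewrite -/u -/v -/l in st.
have TdvE : (T *m (ds - v)) i ord0 = (T *m ds) i ord0 - (T *m v) i ord0 by rewrite mulmxBr subE.
have gi : g i ord0 = (v i ord0 - (1 + eta * (D i i + l)) * u i ord0) / eta - (T *m v) i ord0.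
  by rewrite st; field; rewrite ?lt0r_neq0.
have Id : eta * rho = - (u i ord0 - v i ord0) + eta * D i i * (ds i ord0 - u i ord0)
   + eta * (T *m (ds - v)) i ord0 + eta * ls * (ds i ord0 - u i ord0)
   + eta * (ls - l) * u i ord0.
  by rewrite rhoE TdvE gi; field; rewrite ?lt0r_neq0.
have b1 : `|- (u i ord0 - v i ord0)| <= e.
  by rewrite normrN -subE; apply: le_trans (coord_le _ _) (ltW hw).
have b2 : `|ds i ord0 - u i ord0| <= e.
  by rewrite distrC -subE; apply: le_trans (coord_le _ _) (ltW hk).
have b3 : `|(T *m (ds - v)) i ord0| <= 2 * specnorm T * e.
  apply: le_trans (coord_le _ _) _; apply: le_trans (spec_bound T _) _.
  have : norm2 (ds - v) <= 2 * e.
    have := norm2_triangle (ds - u) (u - v).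
    rewrite addrA subrK norm2_swap; lra.
  move=> h; have := ler_wpM2l S0 h; lra.
have b4 : `|u i ord0| <= r by apply: le_trans (coord_le _ _) (norm_le _).
have b5 : `|ls - l| <= e by rewrite distrC ltW.
have t2 : `|eta * D i i * (ds i ord0 - u i ord0)| <= eta * D i i * e.
  apply: absM_le b2; rewrite ger0_norm //; apply: mulr_ge0; [exact: ltW | exact: (proj2 hD i)].
have t3 : `|eta * (T *m (ds - v)) i ord0| <= eta * (2 * specnorm T * e).
  by apply: absM_le b3; rewrite ger0_norm // ltW.
have t4 : `|eta * ls * (ds i ord0 - u i ord0)| <= eta * `|ls| * e.
  by apply: absM_le b2; rewrite normrM ger0_norm // ltW.
have t5 : `|eta * (ls - l) * u i ord0| <= eta * e * r.
  by apply: absM_le b4; apply: absM_le b5; rewrite ger0_norm // ltW.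
have : `|eta * rho| <= e + eta * D i i * e + eta * (2 * specnorm T * e) + eta * `|ls| * e + eta * e * r.
  rewrite Id; move: b1 t2 t3 t4 t5; rewrite !ler_norml => /andP[? ?] /andP[? ?] /andP[? ?] /andP[? ?] /andP[? ?].
  apply/andP; split; lra.
rewrite normrM (ger0_norm (ltW eta0)) => h.
apply: (le_trans h); rewrite le_eqVlt; apply/orP; left; apply/eqP; ring.
Qed.

End Main.


Theorem mainTheorem7 (R : realType) (n : nat) (D T : 'M[R]_n) (g : 'cV[R]_n)
  (r a eta eta_min : R) (d : nat -> 'cV[R]_n) (lam : nat -> R) :
  (1 <= n)%N -> 0 < r -> g != 0 ->
  is_diag_nonneg D -> T^T = T ->
  0 < a -> 0 < eta_min -> eta_min <= eta -> eta <= 1 / (specnorm T + 2 * a) ->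
  aie_iterates D T g r eta d lam ->
  forall (ds : 'cV[R]_n) (ls : R),
    limit_point d lam ds ls -> kkt_point (D + T) g r ds ls.
Proof.
move=> hn r0 g0 hD hsym a0 em0 eme etale hit ds ls hlp.
have eta0 : 0 < eta by apply: lt_le_trans em0 eme.
have S0 := spec_ge0 T.
have ca : a <= eta^-1 - specnorm T / 2.
  have p : 0 < specnorm T + 2 * a by lra.
  move: etale; rewrite ler_pdivlMr // => h.
  have ie : eta * eta^-1 = 1 by rewrite mulfV // lt0r_neq0.
  have iep : 0 < eta^-1 by rewrite invr_gt0.
  nra.
split; first exact: (stat hD eta0 hit hsym a0 ca r0 hlp).
split; first exact: (ls_ge0 hit hlp).
split; first exact: (ds_le hD eta0 hit r0 hlp).
exact: (compl hD eta0 hit r0 hlp).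
Qed.
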